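(* Let $f$ be an essentially sub-linear dimension function. Then $\lim_{x\to 0}\frac{f(x)}{x}=\infty$, and there exist constants $C\ge 1$ and $\delta>0$ such that $\frac{f(x_2)}{x_2}\le C\,\frac{f(x_1)}{x_1}$ whenever $0<x_1<x_2<\delta$.
   Context: A dimension function is an increasing continuous function $f:\mathbb{R}_+\to\mathbb{R}_+$ with $f(r)\to 0$ as $r\to 0$. It is essentially sub-linear if there exists $B>1$ such that $\limsup_{x\to 0}\frac{f(Bx)}{f(x)}<B$. *)

(* Defs.v *)
From HB Require Import structures.
From mathcomp Require Import all_boot all_order all_algebra.
From mathcomp Require Import all_classical all_reals all_analysis.
Set Implicit Arguments. Unset Strict Implicit. Unset Printing Implicit Defensive.
Import Order.TTheory GRing.Theory Num.Theory.
Import numFieldNormedType.Exports.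
Local Open Scope classical_set_scope.
Local Open Scope ring_scope.

(* A dimension function: f : R_+ -> R_+ (represented as R -> R, only values on
   (0, +oo) matter), (strictly) increasing, continuous, with f(r) -> 0 as r -> 0+. *)
Definition dimension_function (R : realType) (f : R -> R) : Prop :=
  [/\ (forall x, 0 < x -> 0 <= f x),
      (forall x y, 0 < x -> x < y -> f x < f y),
      {in `]0, +oo[, continuous f} &
      f x @[x --> (0:R)^'+] --> 0].

Definition essentially_sublinear (R : realType) (f : R -> R) : Prop :=
  exists B : R, 1 < B /\
    (limf_esup (fun x => ((f (B * x) / f x)%:E)) (0:R)^'+ < B%:E)%E.

(* Main.v *)
Require Import Defs.
From HB Require Import structures.
From mathcomp Require Import all_boot all_order all_algebra.
From mathcomp Require Import all_classical all_reals all_analysis.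
From mathcomp Require Import ring lra.
Import Order.TTheory GRing.Theory Num.Theory.
Import numFieldNormedType.Exports.
Local Open Scope classical_set_scope.
Local Open Scope ring_scope.

Lemma pow_unbounded (R : realType) (a M : R) : 1 < a -> exists n : nat, M < a ^+ n.
Proof.
move=> a1.
have bern : forall n : nat, 1 + n%:R * (a - 1) <= a ^+ n.
  elim=> [|n IH]; first by rewrite mul0r addr0 expr0.
  rewrite exprS -natr1.
  have n0 : 0 <= n%:R :> R by [].
  have h1 : 0 <= n%:R * ((a - 1) * (a - 1)) :> R by rewrite mulr_ge0 // mulr_ge0 // subr_ge0 ltW.
  have h2 : (a - 1) * (1 + n%:R * (a - 1)) <= (a - 1) * a ^+ n by rewrite ler_wpM2l // subr_ge0 ltW.
  nra.
have h : 0 <= `|M| / (a - 1) by rewrite divr_ge0 // subr_ge0 ltW.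
exists (Num.bound (`|M| / (a - 1))).
have := archi_boundP h; set m := (Num.bound _)%:R => hm.
have := bern (Num.bound (`|M| / (a - 1))); rewrite -/m => hb.
have : `|M| < m * (a - 1) by rewrite -ltr_pdivrMr ?subr_gt0.
have := ler_norm M. lra.
Qed.

Lemma right_nbhs (R : realType) (V : set R) : (0:R)^'+ V -> exists2 e : R, 0 < e & forall x, 0 < x -> x < e -> V x.
Proof.
move=> hV.
have [e e0 He] := (nbhs_ballP _ _).1 hV.
exists e => // x x0 xe; apply: He => //.
by rewrite /ball /= sub0r normrN gtr0_norm.
Qed.

Lemma right_nbhs' (R : realType) (P : R -> Prop) (e : R) : 0 < e -> (forall x, 0 < x -> x < e -> P x) -> \forall x \near (0:R)^'+, P x.
Proof.
move=> e0 H; apply/nbhs_ballP; exists e => //= x.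
rewrite /ball /= sub0r normrN => hx x0; apply: H => //.
by rewrite -(gtr0_norm x0).
Qed.
Theorem mainTheorem4 (R : realType) (f : R -> R) :
  dimension_function f -> essentially_sublinear f ->
  (f x / x @[x --> (0:R)^'+] --> +oo) /\
  exists C : R, exists delta : R, 1 <= C /\ 0 < delta /\
    forall x1 x2 : R, 0 < x1 -> x1 < x2 -> x2 < delta ->
      f x2 / x2 <= C * (f x1 / x1).
Proof.
rewrite /dimension_function /essentially_sublinear.
move=> [fge0 finc _ _] [B [B1 hsup]].
have B0 : 0 < B by apply: lt_trans B1.
have fpos : forall x, 0 < x -> 0 < f x.
  move=> x x0; apply: (le_lt_trans (fge0 (x / 2) _)); first by rewrite divr_gt0.
  apply: finc; first by rewrite divr_gt0.
  lra.
have fle : forall x y, 0 < x -> x <= y -> f x <= f y.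
  move=> x y x0; rewrite le_eqVlt => /orP[/eqP->//|xy]; exact/ltW/finc.
move: hsup; rewrite /limf_esup => /ereal_inf_lt [_ [V hV <-] hVB].
set s := ereal_sup _ in hVB.
have [eps eps0 HV] := @right_nbhs R V hV.
pose q := Num.max 1 ((fine s + B) / 2).
have q1 : 1 <= q by rewrite le_max lexx.
have qB : q < B.
  rewrite gt_max B1 /=; move: hVB; case: (s) => [r| |] /= h.
  - rewrite lte_fin in h; lra.
  - by [].
  - lra.
have sq : (s <= q%:E)%E.
  rewrite /q; move: hVB; case: (s) => [r|//|_]; last by rewrite leNye.
  rewrite lte_fin lee_fin => rB; rewrite le_max; apply/orP; right.
  rewrite /=; lra.
have key0 : forall x, 0 < x -> x < eps -> f (B * x) <= q * f x.
  move=> x x0 xe.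
  have : ((f (B * x) / f x)%:E <= s)%E.
    by apply: ereal_sup_ubound; exists x => //; apply: HV.
  move=> /le_trans /(_ sq); rewrite lee_fin ler_pdivrMr //; exact: fpos.
pose g x := f x / x.
have q0 : 0 < q by apply: lt_le_trans q1.
have gpos : forall x, 0 < x -> 0 < g x by move=> x x0; rewrite /g divr_gt0 // fpos.
have key1 : forall x, 0 < x -> x < eps -> g (B * x) <= (q / B) * g x.
  move=> x x0 xe; rewrite /g.
  have -> : q / B * (f x / x) = (q * f x) / (B * x).
    by field; apply/andP; split; apply: lt0r_neq0.
  by rewrite ler_pM2r ?invr_gt0 ?mulr_gt0 // key0.
have claimn : forall n : nat, forall x1 x2, 0 < x1 -> x1 <= x2 -> x2 < eps ->
    x2 < B ^+ n * x1 -> g x2 <= q * g x1.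
  elim=> [|n IH] x1 x2 x10 x12 x2e.
    by rewrite expr0 mul1r => /(le_lt_trans x12); rewrite ltxx.
  move=> hn.
  have x20 : 0 < x2 by apply: lt_le_trans x12.
  have [x2B|Bx2] := ltP x2 (B * x1).
    rewrite /g; apply: (@le_trans _ _ (f x2 / x1)).
      by rewrite ler_pM2l ?fpos // lef_pV2 ?posrE.
    rewrite mulrA ler_pM2r ?invr_gt0 //; apply: le_trans (key0 _ x10 _).
      exact/ltW/finc.
    exact: le_lt_trans x2e.
  move: hn; rewrite exprSr -mulrA => hn.
  have h := IH (B * x1) x2 (mulr_gt0 B0 x10) Bx2 x2e hn; apply: (le_trans h).
  rewrite ler_pM2l //; apply: (le_trans (key1 _ x10 _)).
    exact: le_lt_trans x12 x2e.
  by rewrite ger_pMl ?gpos // ler_pdivrMr // mul1r ltW.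
have claim : forall x1 x2, 0 < x1 -> x1 <= x2 -> x2 < eps -> g x2 <= q * g x1.
  move=> x1 x2 x10 x12 x2e.
  have [n hn] := @pow_unbounded R B (x2 / x1) B1.
  apply: (claimn n) => //; by rewrite -ltr_pdivrMr.
split; last first.
  exists q, eps; split => //; split => // x1 x2 x10 x12 x2e; apply: claim => //; exact: ltW.
pose y0 := eps / 2.
have y00 : 0 < y0 by rewrite divr_gt0.
have y0e : y0 < eps by rewrite /y0; lra.
pose c := g y0 / q.
have c0 : 0 < c by rewrite divr_gt0 ?gpos.
have Bq1 : 1 < B / q by rewrite ltr_pdivlMr // mul1r.
have claim1 : forall n : nat, forall x, 0 < x -> B ^+ n * x < y0 -> c * (B / q) ^+ n <= g x.
  elim=> [|n IH] x x0.
    rewrite expr0 mul1r mulr1 => xy.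
    rewrite /c ler_pdivrMr // mulrC; apply: claim => //; exact: ltW.
  rewrite exprSr -mulrA => hB.
  have Bx0 : 0 < B * x by rewrite mulr_gt0.
  have := IH _ Bx0 hB => h.
  have xe : x < eps.
    have e1 : 1 <= B ^+ n * B by rewrite mulr_ege1 // ?exprn_ege1 // ltW.
    move: hB e1 y0e x0; set t := B ^+ n; clearbody y0; move=> *; nra.
  have := le_trans h (key1 _ x0 xe) => h'; rewrite exprSr mulrA.
  have -> : g x = q / B * g x * (B / q).
    by field; apply/andP; split; apply: lt0r_neq0.
  by rewrite ler_pM2r ?divr_gt0.
apply/cvgryPge => A.
have [n hn] := @pow_unbounded R (B / q) (A / c) Bq1.
apply: (@right_nbhs' _ _ (y0 / B ^+ n)); first by rewrite divr_gt0 // exprn_gt0.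
move=> x x0 xy; apply: (le_trans _ (claim1 n x x0 _)).
  by rewrite mulrC -ler_pdivrMr // ltW.
by rewrite mulrC -ltr_pdivlMr // exprn_gt0.
Qed.
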